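(* Let $(X,d)$ be a separable metric space, let $T\colon X\to X$ be a Borel measurable map, and let $\mu,\nu$ be $T$-invariant Borel probability measures on $X$. Let $(s_n)_{n\ge1}$ be a two-jumpy scale sequence. Define \[\phi(x,y)=\liminf_{n\to\infty} s_n\, d(T^n x,y),\qquad \psi(x,y)=\liminf_{n\to\infty} s_n\, d(T^n x,T^n y),\qquad x,y\in X.\] Then both $\phi$ and $\psi$ take values in $\{0,\infty\}$ for $\mu\times\nu$-almost every $(x,y)\in X\times X$. In particular, for every $\alpha>0$ this holds for the gauges $\phi_\alpha(x,y)=\liminf_{n} n^\alpha d(T^nx,y)$ and $\psi_\alpha(x,y)=\liminf_n n^\alpha d(T^nx,T^ny)$.
   Context: A scale sequence is a sequence $(s_n)_{n\ge1}$ of positive reals with $s_n\to\infty$. It is two-jumpy if $s_{n+1}\ge s_n$ for all sufficiently large $n$ and $\liminf_{n\to\infty} s_{2n}/s_n>1$. A measure $\mu$ is $T$-invariant if $\mu(T^{-1}B)=\mu(B)$ for all Borel sets $B$. *)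

(* Defs.v *)
From HB Require Import structures.
From mathcomp Require Import all_boot all_order all_algebra.
From mathcomp Require Import all_classical all_reals all_analysis.
Set Implicit Arguments. Unset Strict Implicit. Unset Printing Implicit Defensive.
Import Order.TTheory GRing.Theory Num.Theory.
Local Open Scope classical_set_scope.
Local Open Scope ring_scope.

Definition is_metric (R : realType) (X : Type) (dist : X -> X -> R) : Prop :=
  [/\ (forall x y, 0 <= dist x y),
      (forall x y, dist x y = 0 <-> x = y),
      (forall x y, dist x y = dist y x) &
      (forall x y z, dist x z <= dist x y + dist y z)].

Definition metric_open (R : realType) (X : Type) (dist : X -> X -> R)
  (U : set X) : Prop :=
  forall x, U x -> exists2 r : R, 0 < r & [set y | dist x y < r] `<=` U.

Definition metric_separable (R : realType) (X : Type) (dist : X -> X -> R)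
  : Prop :=
  exists D : set X, countable D /\
    forall x (e : R), 0 < e -> exists2 y, D y & dist x y < e.

Definition borel_of_metric (R : realType) (d : measure_display)
  (X : measurableType d) (dist : X -> X -> R) : Prop :=
  forall A : set X, measurable A <-> <<s metric_open dist >> A.

(* scale sequence (indices n >= 1; the value at n = 0 is irrelevant) *)
Definition scale_sequence (R : realType) (s : nat -> R) : Prop :=
  (forall n, (0 < n)%N -> 0 < s n) /\ s @ \oo --> +oo.

Definition two_jumpy (R : realType) (s : nat -> R) : Prop :=
  (\forall n \near \oo, s n <= s n.+1) /\
  (1 < limn_einf (fun n => (s (2 * n)%N / s n)%:E))%E.

Definition T_invariant (R : realType) (d : measure_display)
  (X : measurableType d) (T : X -> X) (mu : set X -> \bar R) : Prop :=
  forall B : set X, measurable B -> mu (T @^-1` B) = mu B.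

Definition phi_gauge (R : realType) (X : Type) (dist : X -> X -> R)
  (T : X -> X) (s : nat -> R) (x y : X) : \bar R :=
  limn_einf (fun n => (s n * dist (iter n T x) y)%:E).

Definition psi_gauge (R : realType) (X : Type) (dist : X -> X -> R)
  (T : X -> X) (s : nat -> R) (x y : X) : \bar R :=
  limn_einf (fun n => (s n * dist (iter n T x) (iter n T y))%:E).

Definition zero_or_infty (R : realType) (v : \bar R) : Prop :=
  v = 0%E \/ v = +oo%E.

(* Main.v *)
Require Import Defs.
From HB Require Import structures.
From mathcomp Require Import all_boot all_order all_algebra.
From mathcomp Require Import all_classical all_reals all_analysis.
From mathcomp Require Import measurable_realfun.
From mathcomp Require Import ring lra zify.
Import Order.TTheory GRing.Theory Num.Theory.
Local Open Scope classical_set_scope.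
Local Open Scope ring_scope.
Section Liminf.
Context {R : realType}.
Local Open Scope ereal_scope.

Lemma liminfE (u : (\bar R)^nat) : limn_einf u = ereal_sup (range (einfs u)).
Proof. by rewrite limn_einf_lim; apply: cvg_lim => //; exact: cvg_einfs_sup. Qed.

Lemma liminf_gt (u : (\bar R)^nat) x : x < limn_einf u ->
  exists N, forall m, (N <= m)%N -> x < u m.
Proof.
rewrite liminfE => /ereal_sup_gt [_ [n _ <-]] hx; exists n => m hm.
apply: (lt_le_trans hx); apply: ereal_inf_lbound; exists m => //.
Qed.

Lemma liminf_lt (u : (\bar R)^nat) x : limn_einf u < x ->
  forall N, exists m, (N <= m)%N /\ u m < x.
Proof.
rewrite liminfE => hx N.
have : einfs u N < x.
  apply: le_lt_trans hx; apply: ereal_sup_ubound; exists N => //.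
move=> /ereal_inf_lt [_ [m hm <-]] hu; exists m; split => //.
Qed.

Lemma liminf_ge (u : (\bar R)^nat) x N : (forall m, (N <= m)%N -> x <= u m) ->
  x <= limn_einf u.
Proof.
move=> h; rewrite liminfE; apply: (le_trans (y := einfs u N)).
  apply/ereal_infP => _ [m hm <-]; exact: h.
apply: ereal_sup_ubound; exists N => //.
Qed.

End Liminf.

Lemma exists_frac {R : realType} (c lam : R) : 0 < c -> 1 < lam ->
  exists p q : nat, c / lam < (p.+1)%:R / (q.+1)%:R < c.
Proof.
move=> c0 lam1.
have lam0 : 0 < lam := lt_trans ltr01 lam1.
have cl : c / lam < c.
  by rewrite ltr_pdivrMr // -{1}(mulr1 c) ltr_pM2l.
have dpos : 0 < c - c / lam by rewrite subr_gt0.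
have [q hq] : exists q : nat, (c - c / lam)^-1 < q.+1%:R.
  by exists (Num.truncn (c - c / lam)^-1); exact: truncnS_gt.
set x := q.+1%:R * (c / lam).
have x0 : 0 <= x by rewrite mulr_ge0 // divr_ge0 // ltW.
have /andP[px xp] := truncn_itv x0.
set p := Num.truncn x in px xp.
exists p, q; apply/andP; split.
  by rewrite ltr_pdivlMr // mulrC.
rewrite ltr_pdivrMr //.
have q1 : 1 < q.+1%:R * (c - c / lam).
  by rewrite -ltr_pdivrMr // mul1r.
have : p.+1%:R <= x + 1 by rewrite -natr1 lerD2r.
rewrite /x => h1; move: q1; rewrite mulrBr => q1.
rewrite (mulrC c); lra.
Qed.
Section Comb.
Context {R : realType}.

Lemma sum_le_count (y : nat -> R) a b : (forall i, y i <= 1) ->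
  \sum_(a <= i < b) y i <= (b - a)%:R.
Proof.
move=> y1; apply: (le_trans (y := \sum_(a <= i < b) (1:R))).
  by apply: ler_sum => i _.
by rewrite sumr_const_nat.
Qed.

Lemma sum_ge0n (x : nat -> R) a b : (forall i, 0 <= x i) -> 0 <= \sum_(a <= i < b) x i.
Proof. by move=> x0; apply: sumr_ge0 => i _. Qed.

Lemma sum_mono_hi (x : nat -> R) a b c : (forall i, 0 <= x i) -> (a <= b <= c)%N ->
  \sum_(a <= i < b) x i <= \sum_(a <= i < c) x i.
Proof.
move=> x0 /andP[ab bc]; rewrite (big_cat_nat ab bc) /=.
by rewrite lerDl; apply: sum_ge0n.
Qed.

Lemma comb (x y : nat -> R) (L : nat) :
  (forall i, 0 <= x i) -> (forall i, y i <= 1) ->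
  (forall i, y i != 0 -> exists n, (0 < n <= L)%N /\
      n%:R <= 4 * \sum_(i <= k < i + n) x k) ->
  forall H i0, \sum_(i0 <= i < i0 + H) y i <= 4 * \sum_(i0 <= k < i0 + H + L) x k.
Proof.
move=> x0 y1 hy; elim/ltn_ind => H IH i0.
case: H IH => [|H] IH.
  rewrite addn0 big_geq // mulr_ge0 //; exact: sum_ge0n.
have [yi0|/hy [n [/andP[n0 nL] hn]]] := eqVneq (y i0) 0.
  rewrite big_ltn ?yi0 ?add0r; last by lia.
  rewrite (big_ltn (m := i0)); last by lia.
  apply: (le_trans (y := 4 * \sum_(i0.+1 <= k < i0.+1 + H + L) x k)).
    by have := IH H (ltnSn H) i0.+1; rewrite addSnnS.
  by rewrite addSnnS ler_pM2l // lerDr.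
have [Hn|nH] := leqP H.+1 n.
  apply: (le_trans (sum_le_count _ _ _ y1)).
  apply: (le_trans (y := n%:R)); first by rewrite ler_nat; lia.
  apply: (le_trans hn); rewrite ler_pM2l //; apply: sum_mono_hi => //; lia.
rewrite (big_cat_nat (n := i0 + n)) /=; try lia.
rewrite (big_cat_nat (n := i0 + n) (m := i0) (p := i0 + H.+1 + L)) /=; try lia.
rewrite mulrDr; apply: lerD.
  apply: (le_trans (sum_le_count _ _ _ y1)).
  by rewrite (_ : (i0 + n - i0)%N = n) //; lia.
have := IH (H.+1 - n)%N ltac:(lia) (i0 + n).
by rewrite (_ : (i0 + n + (H.+1 - n))%N = (i0 + H.+1)%N); [|lia].
Qed.

End Comb.

Lemma mpre d1 d2 (T1 : measurableType d1) (T2 : measurableType d2)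
  (f : T1 -> T2) (A : set T2) :
  measurable_fun setT f -> measurable A -> measurable (f @^-1` A).
Proof. by move=> mf mA; rewrite -[_ @^-1` _]setTI; exact: mf. Qed.
Arguments mpre {d1 d2 T1 T2 f A}.

Lemma indic_pre (U V : Type) (R : realType) (f : U -> V) (A : set V) w :
  \1_(f @^-1` A) w = \1_A (f w) :> R.
Proof.
rewrite !indicE; congr (_%:R); apply/idP/idP; rewrite !inE //.
Qed.

Lemma indic_ge0 (U : Type) (R : realType) (A : set U) w : 0 <= \1_A w :> R.
Proof. by rewrite indicE; case: (_ \in _). Qed.

Lemma indic_le1 (U : Type) (R : realType) (A : set U) w : \1_A w <= 1 :> R.
Proof. by rewrite indicE; case: (_ \in _). Qed.

Lemma indic_neq0 (U : Type) (R : realType) (A : set U) w : \1_A w != 0 :> R -> A w.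
Proof. by rewrite indicE; case: (boolP (w \in A)) => [/set_mem|] //; rewrite eqxx. Qed.

Section Erg.
Context d (T : measurableType d) (R : realType) (P : probability T R)
  (S : T -> T).
Hypothesis mS : measurable_fun setT S.
Hypothesis PS : forall A, measurable A -> P (S @^-1` A) = P A.

Lemma miter k : measurable_fun setT (iter k S).
Proof.
elim: k => [|k IH] /=; first exact: measurable_id.
exact: (measurableT_comp mS IH).
Qed.

Lemma Piter k A : measurable A -> P (iter k S @^-1` A) = P A.
Proof.
elim: k A => [|k IH] A mA //=.
rewrite (_ : iter k.+1 S @^-1` A = iter k S @^-1` (S @^-1` A)) //.
by rewrite IH ?PS //; exact: mpre.
Qed.

Definition cnt (E : set T) n w : R := \sum_(0 <= k < n) \1_E (iter k S w).

Definition GL E L :=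
  [set w | exists n, (0 < n <= L)%N /\ n%:R <= 4 * cnt E n w].

Lemma mcnt E n : measurable E -> measurable_fun setT (cnt E n).
Proof.
move=> mE; rewrite /cnt; apply: measurable_sum => k.
apply: measurableT_comp; [exact: measurable_indic|exact: miter].
Qed.

Lemma mGL E L : measurable E -> measurable (GL E L).
Proof.
move=> mE.
rewrite (_ : GL E L = \bigcup_n (if (0 < n <= L)%N then
   (fun w => 4 * cnt E n w) @^-1` `[n%:R, +oo[ else set0)).
  apply: bigcupT_measurable => n; case: ifP => _ //.
  apply: mpre => //; apply: measurable_funM => //; exact: mcnt.
apply/seteqP; split => w /=.
  move=> [n [hn le]]; exists n => //; rewrite hn /= in_itv /= le //.
move=> [n _]; case: ifP => // hn /=; rewrite in_itv /= andbT => le.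
by exists n.
Qed.

Lemma maximal E L : measurable E -> (P (GL E L) <= 4%:E * P E)%E.
Proof.
move=> mE; set G := GL E L; have mG : measurable G by exact: mGL.
have key H : (\sum_(0 <= i < H) P G <= \sum_(0 <= k < H + L) (4%:E * P E))%E.
  pose f i w := (\1_(iter i S @^-1` G) w)%:E : \bar R.
  pose g k w := ((4 * \1_(iter k S @^-1` E) w)%:E) : \bar R.
  have mf i : measurable_fun setT (f i).
    apply/measurable_EFinP; apply: measurable_indic; exact: mpre (miter i) mG.
  have mg k : measurable_fun setT (g k).
    apply/measurable_EFinP; apply: measurable_funM => //.
    apply: measurable_indic; exact: mpre (miter k) mE.
  have f0 i w : (0 <= f i w)%E by rewrite lee_fin indic_ge0.
  have g0 k w : (0 <= g k w)%E by rewrite lee_fin mulr_ge0 // indic_ge0.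
  have -> : (\sum_(0 <= i < H) P G = \int[P]_w \sum_(0 <= i < H) f i w)%E.
    rewrite ge0_integral_sum //; apply: eq_bigr => i _.
    rewrite integral_indic //; last exact: mpre (miter i) mG.
    by rewrite setIT; symmetry; exact: (Piter i _ mG).
  have -> : (\sum_(0 <= k < H + L) (4%:E * P E) =
      \int[P]_w \sum_(0 <= k < H + L) g k w)%E.
    rewrite ge0_integral_sum //; apply: eq_bigr => k _.
    rewrite /g; under eq_integral do rewrite EFinM.
    have hm : measurable_fun setT (fun x => (\1_(iter k S @^-1` E) x)%:E : \bar R).
      apply/measurable_EFinP; apply: measurable_indic; exact: mpre (miter k) mE.
    rewrite (ge0_integralZl_EFin P measurableT _ hm); last 2 first.
      by move=> w _; rewrite lee_fin indic_ge0.
      by [].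
    rewrite integral_indic //; last exact: mpre (miter k) mE.
    by rewrite setIT; congr (_ * _)%E; symmetry; exact: (Piter k _ mE).
  apply: ge0_le_integral => //.
  - by move=> w _; apply: sume_ge0 => i _.
  - exact: emeasurable_sum.
  - exact: emeasurable_sum.
  move=> w _; rewrite /f /g !sumEFin lee_fin.
  under eq_bigr do rewrite indic_pre.
  under [X in _ <= X]eq_bigr do rewrite indic_pre.
  rewrite -mulr_sumr.
  have := @comb R (fun k => \1_E (iter k S w)) (fun i => \1_G (iter i S w))
    L _ _ _ H 0; rewrite !add0n; apply.
  - by move=> i; exact: indic_ge0.
  - by move=> i; exact: indic_le1.
  move=> i /= hi; have := @indic_neq0 T R G (iter i S w) hi; rewrite /G /GL /= => -[n [hn le]]; exists n; split => //.
  apply: (le_trans le); rewrite /cnt.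
  rewrite -{2}(add0n i) big_addn addKn.
  by under eq_bigr do rewrite iterD.
have PGf : P G \is a fin_num by exact: fin_num_measure.
have PEf : P E \is a fin_num by exact: fin_num_measure.
rewrite -(fineK PGf) -(fineK PEf) in key *.
rewrite -EFinM lee_fin.
set gg := fine (P G) in key *; set ee := fine (P E) in key *.
have ee0 : 0 <= ee by rewrite fine_ge0 // measure_ge0.
rewrite leNgt; apply/negP => lt.
have gpos : 0 < gg - 4 * ee by rewrite subr_gt0.
set q := 4 * ee * L%:R / (gg - 4 * ee).
have [H Hq] : exists H : nat, q < H%:R.
  by exists (Num.truncn q).+1; exact: truncnS_gt.
have := key H.
under [X in (_ <= X)%E]eq_bigr do rewrite -EFinM.
rewrite !sumEFin lee_fin !sumr_const_nat !subn0.
rewrite -(mulr_natr gg) -(mulr_natr (4 * ee)) natrD => kH.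
move: Hq; rewrite /q ltr_pdivrMr // => Hq.
have e1 : H%:R * (gg - 4 * ee) = gg * H%:R - 4 * ee * H%:R by ring.
rewrite e1 in Hq; rewrite mulrDr in kH.
set u := gg * H%:R in kH Hq; set v := 4 * ee * H%:R in kH Hq.
set z := 4 * ee * L%:R in kH Hq.
lra.
Qed.

Section Main.
Variables (Z : T -> R) (s : nat -> R) (lam a : R) (N0 : nat).
Hypothesis mZ : measurable_fun setT Z.
Hypothesis Z0 : forall w, 0 <= Z w.
Hypothesis lam1 : 1 < lam.
Hypothesis a0 : 0 < a.
Hypothesis hs0 : forall n, (N0 <= n)%N -> 0 < s n.
Hypothesis hmono : forall n, (N0 <= n)%N -> s n <= s n.+1.
Hypothesis hdbl : forall n, (N0 <= n)%N -> lam * s n <= s (2 * n).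

Definition ff n w := s n * Z (iter n S w).

Lemma mff n : measurable_fun setT (ff n).
Proof.
apply: measurable_funM => //; apply: measurableT_comp => //; exact: miter.
Qed.

Definition Aset M := [set w | forall m, (M < m)%N -> a <= ff m w].
Definition Dset := [set w | exists M, Aset M w].
Definition Hits := [set w | forall N, exists j, (N <= j)%N /\ ff j w < lam * a].
Definition Cset := Hits `&` Dset.

Lemma mAset M : measurable (Aset M).
Proof.
rewrite (_ : Aset M = \bigcap_m (if (M < m)%N then ff m @^-1` `[a, +oo[ else setT)).
  apply: bigcapT_measurable => m; case: ifP => _ //.
  apply: mpre => //; exact: mff.
apply/seteqP; split => w /=.
  move=> h m _; case: ifP => // hm /=; rewrite in_itv /= andbT; exact: h.
move=> h m hm; have := h m I; rewrite hm /= in_itv /= andbT; exact.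
Qed.

Lemma mDset : measurable Dset.
Proof.
rewrite (_ : Dset = \bigcup_M Aset M); first exact: bigcupT_measurable mAset.
by apply/seteqP; split => w /= [M hM]; exists M.
Qed.

Lemma mHits : measurable Hits.
Proof.
rewrite (_ : Hits = \bigcap_N \bigcup_j
   (if (N <= j)%N then ff j @^-1` `]-oo, lam * a[ else set0)).
  apply: bigcapT_measurable => N; apply: bigcupT_measurable => j.
  case: ifP => _ //; apply: mpre => //; exact: mff.
apply/seteqP; split => w /=.
  move=> h N _; have [j [hj hl]] := h N; exists j => //.
  by rewrite hj /= in_itv /= hl.
move=> h N; have [j _] := h N I; case: ifP => // hj /=.
by rewrite in_itv /= => hl; exists j.
Qed.

Lemma mCset : measurable Cset.
Proof. exact: measurableI mHits mDset. Qed.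

Lemma smono p q : (N0 <= p)%N -> (p <= q)%N -> s p <= s q.
Proof.
move=> hp; elim: q => [|q IH] hpq.
  by have -> : p = 0%N by lia.
have [hq|hq] := leqP p q.
  by apply: (le_trans (IH hq)); apply: hmono; lia.
by have -> : p = q.+1 by lia.
Qed.

Lemma DS : S @^-1` Dset `<=` Dset.
Proof.
move=> w [M hM]; exists (maxn M N0).+1 => m hm.
have := hM m.-1 ltac:(lia); rewrite /ff -iterSr.
rewrite (_ : m.-1.+1 = m); last by lia.
move=> h; apply: (le_trans h); apply: ler_wpM2r => //.
have := hmono m.-1 ltac:(lia); rewrite (_ : m.-1.+1 = m) //; lia.
Qed.

Definition Null := \bigcup_i (iter i S @^-1` (Dset `\` S @^-1` Dset)).

Lemma mDD : measurable (Dset `\` S @^-1` Dset).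
Proof. apply: measurableD; [exact: mDset|exact: mpre mS mDset]. Qed.

Lemma PDD : P (Dset `\` S @^-1` Dset) = 0%E.
Proof.
rewrite measureD //; [|exact: mDset|exact: mpre mS mDset|].
  rewrite setIidr; last exact: DS.
  transitivity (P Dset - P Dset)%E.
    by congr (_ - _)%E; exact: PS mDset.
  rewrite subee //; exact: fin_num_measure mDset.
by rewrite (le_lt_trans (probability_le1 _ mDset)) // ltry.
Qed.

Lemma mNull : measurable Null.
Proof. apply: bigcupT_measurable => i; exact: mpre (miter i) mDD. Qed.

Lemma PNull : P Null = 0%E.
Proof.
apply/negligibleP; first exact: mNull.
apply: negligible_bigcup => i; apply/negligibleP; first exact: mpre (miter i) mDD.
exact: (etrans (Piter i _ mDD) PDD).
Qed.

Lemma orbit w : Dset w -> ~ Null w -> forall k, Dset (iter k S w).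
Proof.
move=> dw nN; elim => [|k IH] //=.
have : (S @^-1` Dset) (iter k S w).
  apply: contrapT => hn; apply: nN; exists k => //.
by [].
Qed.

Definition EM M := Dset `\` Aset M.

Lemma mEM M : measurable (EM M).
Proof. apply: measurableD; [exact: mDset|exact: mAset]. Qed.

Lemma EM_cvg : (P \o EM) @ \oo --> 0%E.
Proof.
have -> : 0%E = P (\bigcap_n EM n).
  rewrite (_ : \bigcap_n EM n = set0) ?measure0 //.
  apply/seteqP; split => w // hw.
  have [[M hM] _] := hw 0%N I.
  by have [_ /(_ hM)] := hw M I.
apply: nonincreasing_cvg_mu.
- by rewrite (le_lt_trans (probability_le1 _ (mEM 0))) // ltry.
- exact: mEM.
- exact: bigcapT_measurable mEM.
- move=> m n mn; apply/subsetPset => w [dw nA]; split => // hA; apply: nA.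
  by move=> k hk; apply: hA; lia.
Qed.

Lemma incl M : (N0 <= M)%N -> Cset `\` Null `<=` \bigcup_L GL (EM M) L.
Proof.
move=> hM w [[hits dw] nN].
have [j [hj hfj]] := hits (4 * M + 4 + 2 * N0)%N.
set h := (j %/ 2)%N.
have Zj0 := Z0 (iter j S w).
have hEM k : (j - h <= k < j - M)%N -> EM M (iter k S w).
  move=> /andP[k1 k2]; split; first exact: orbit.
  move=> hA; have := hA (j - k)%N ltac:(lia).
  rewrite /ff -iterD subnK; last by lia.
  move=> ha.
  have s1 : s (j - k) <= s h by apply: smono; lia.
  have s2 : lam * s h <= s j.
    apply: le_trans (hdbl h ltac:(lia)) _; apply: smono; lia.
  have lam0 : 0 < lam := lt_trans ltr01 lam1.
  have s3 : lam * s (j - k) <= s j.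
    apply: le_trans s2; rewrite ler_pM2l //.
  have s4 : lam * (s (j - k) * Z (iter j S w)) <= s j * Z (iter j S w).
    by rewrite mulrA ler_wpM2r.
  have s5 : lam * a <= lam * (s (j - k) * Z (iter j S w)).
    by rewrite ler_pM2l.
  move: hfj; rewrite /ff => hfj; lra.
exists j => //; exists j; split; first by apply/andP; split; lia.
have hc : (h - M)%:R <= cnt (EM M) j w.
  rewrite /cnt (big_cat_nat (n := j - h)) /=; try lia.
  rewrite (big_cat_nat (m := j - h) (n := j - M) (p := j)) /=; try lia.
  rewrite addrC -addrA; apply: ler_wpDr.
    by rewrite addr_ge0 // sumr_ge0 // => k _; exact: indic_ge0.
  apply: (le_trans (y := \sum_(j - h <= k < j - M) (1 : R))).
    by rewrite sumr_const_nat; rewrite (_ : (j - M - (j - h))%N = (h - M)%N) //; lia.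
  apply: ler_sum_nat => k hk; rewrite indicE mem_set //; exact: hEM.
apply: (le_trans (y := 4 * (h - M)%:R)).
  by rewrite -natrM ler_nat; lia.
by rewrite ler_pM2l.
Qed.

Lemma PfinE A : measurable A -> P A = (fine (P A))%:E.
Proof. by move=> mA; rewrite fineK //; exact: fin_num_measure. Qed.

Lemma PC : P Cset = 0%E.
Proof.
have bound M : (N0 <= M)%N -> (P Cset <= 4%:E * P (EM M))%E.
  move=> hM.
  have mU : measurable (\bigcup_L GL (EM M) L).
    by apply: bigcupT_measurable => L; exact: mGL (mEM M).
  apply: (le_trans (y := P (Null `|` \bigcup_L GL (EM M) L))).
    apply: le_measure; rewrite ?inE; [exact: mCset| exact: measurableU mNull mU|].
    move=> w Cw; case: (pselect (Null w)) => [|nN]; first by left.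
    by right; exact: (@incl M hM w (conj Cw nN)).
  apply: (le_trans (measureU2 _ mNull mU)).
  rewrite [X in (X + _)%E](_ : _ = 0%E) ?add0e; last exact: PNull.
  change (P (\bigcup_L GL (EM M) L) <= 4%:E * P (EM M))%E.
  have ndGL : nondecreasing_seq (fun L => GL (EM M) L).
    move=> m n mn; apply/subsetPset => w [k [hk le]]; exists k; split => //; lia.
  have cv := @nondecreasing_cvg_mu _ _ _ P (fun L => GL (EM M) L) (fun L => mGL _ L (mEM M)) mU ndGL.
  rewrite -(cvg_lim _ cv) //; apply: lime_le; first by apply/cvg_ex; eexists; exact: cv.
  by apply: nearW => L; exact: maximal _ _ (mEM M).
have h4 : ((4^-1)%:E * P Cset <= 0)%E.
  rewrite -(cvg_lim _ EM_cvg) //; apply: lime_ge; first by apply/cvg_ex; eexists; exact: EM_cvg.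
  near=> M.
  have := bound M; rewrite /= (PfinE _ mCset) (PfinE _ (mEM M)) -!EFinM !lee_fin.
  move=> /(_ _)/wrap[]; [by near: M; exists N0|].
  move=> hb; lra.
apply/eqP; rewrite eq_le measure_ge0 andbT.
move: h4; rewrite (PfinE _ mCset) -EFinM !lee_fin => h4; lra.
Unshelve. all: end_near.
Qed.

End Main.

Lemma abstract (Z : T -> R) (s : nat -> R) :
  measurable_fun setT Z -> (forall w, 0 <= Z w) ->
  scale_sequence s -> two_jumpy s ->
  P.-negligible [set w | ~ zero_or_infty (limn_einf (fun n => (s n * Z (iter n S w))%:E))].
Proof.
move=> mZ Z0 [hs _] [hmon hlim].
have [N1 _ hN1] := hmon.
have [lam [lam1 hlam]] : exists lam : R, 1 < lam /\
    (lam%:E < limn_einf (fun n => (s (2 * n)%N / s n)%:E))%E.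
  move: hlim; case: (limn_einf _) => [r||] //.
  - rewrite lte_fin => r1; exists ((1 + r) / 2); split; [|rewrite lte_fin]; lra.
  - by move=> _; exists 2; split; [lra|exact: ltry].
have [N2 hN2] := liminf_gt _ _ hlam.
set N0 := maxn (maxn N1 N2) 1.
have hs0 n : (N0 <= n)%N -> 0 < s n by move=> h; apply: hs; lia.
have hmono n : (N0 <= n)%N -> s n <= s n.+1.
  by move=> h; apply: hN1 => /=; lia.
have hdbl n : (N0 <= n)%N -> lam * s n <= s (2 * n).
  move=> h; have := hN2 n ltac:(lia); rewrite lte_fin ltr_pdivlMr ?hs0 //.
  by move/ltW.
pose a (p q : nat) : R := (p.+1)%:R / (q.+1)%:R.
have a0 p q : 0 < a p q by rewrite /a divr_gt0.
have cov : [set w | ~ zero_or_infty (limn_einf (fun n => (s n * Z (iter n S w))%:E))]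
    `<=` \bigcup_q \bigcup_p Cset Z s lam (a p q).
  move=> w /= hbad.
  set u := fun n => (s n * Z (iter n S w))%:E.
  have l0 : (0 <= limn_einf u)%E.
    apply: (@liminf_ge R _ _ N0) => m hm.
    by rewrite lee_fin mulr_ge0 // ltW // hs0.
  move: hbad l0; rewrite /zero_or_infty.
  case hl : (limn_einf u) => [c||] hbad l0.
  - have c0 : 0 < c.
      rewrite lt_neqAle -lee_fin l0 andbT; apply/eqP => c0; apply: hbad; left.
      by rewrite -c0.
    have [p [q /andP[h1 h2]]] := exists_frac _ _ c0 lam1.
    have lam0 : 0 < lam := lt_trans ltr01 lam1.
    exists q => //; exists p => //.
    rewrite /Cset /Hits /Dset /Aset /ff /=; split.
    + move=> N.
      have hl2 : (limn_einf u < (lam * a p q)%:E)%E.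
        by rewrite hl lte_fin mulrC -ltr_pdivrMr.
      have [j [hj hu]] := liminf_lt _ _ hl2 N.
      by exists j; split => //; move: hu; rewrite lte_fin.
    + have hl3 : ((a p q)%:E < limn_einf u)%E by rewrite hl lte_fin.
      have [M hM] := liminf_gt _ _ hl3.
      exists M => m hm; have := hM m (ltnW hm); rewrite lte_fin => /ltW.
      by [].
  - by exfalso; apply: hbad; right.
  - by [].
apply: (negligibleS cov).
apply: negligible_bigcup => q; apply: negligible_bigcup => p.
apply/negligibleP; first by apply: mCset.
apply: (@PC Z s lam (a p q) N0); by [].
Qed.

End Erg.

Lemma pow_scale {R : realType} (alpha : R) : 0 < alpha ->
  scale_sequence (fun n : nat => n%:R `^ alpha) /\
  two_jumpy (fun n : nat => n%:R `^ alpha).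
Proof.
move=> a0; split; first split.
- by move=> n n0; rewrite powR_gt0 // ltr0n.
- apply/cvgryPger => A _.
  exists (Num.truncn (`|A| `^ alpha^-1)).+1 => // n /= hn.
  have h1 : `|A| `^ alpha^-1 < n%:R.
    apply: (lt_le_trans (truncnS_gt _)); rewrite ler_nat; exact: hn.
  apply: (le_trans (ler_norm A)).
  have -> : `|A| = (`|A| `^ alpha^-1) `^ alpha.
    by rewrite -powRrM mulVf ?gt_eqF // powRr1.
  apply: ge0_ler_powR; rewrite ?nnegrE ?powR_ge0 ?ler0n ?(ltW h1) ?(ltW a0) //.
- split.
  + exists 0%N => // n _ /=; apply: ge0_ler_powR; rewrite ?nnegrE ?ler0n ?ler_nat ?(ltW a0) //.
  + apply: (lt_le_trans (y := (2 `^ alpha)%:E)).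
      rewrite lte_fin; apply: (le_lt_trans (y := 1 `^ alpha)); first by rewrite powR1.
      by apply: gt0_ltr_powR; rewrite ?nnegrE ?ler01 ?ler0n ?ltr1n.
    apply: (@liminf_ge R _ _ 1%N) => m hm.
    rewrite natrM powRM // mulfK // ?gt_eqF // powR_gt0 // ltr0n.
    by [].
Qed.

Lemma aux1 {R : realType} {a b c r i : R} :
  a < i -> 2 * i < r - c -> b <= a + c -> b < r - i.
Proof. move=> *; lra. Qed.

Lemma aux2 {R : realType} {a b c r i : R} :
  a < i -> b < r - i -> c <= a + b -> c < r.
Proof. move=> *; lra. Qed.

Section Concrete.
Context (R : realType) (d : measure_display) (X : measurableType d)
  (dist : X -> X -> R) (T : X -> X) (mu nu : probability X R).
Hypothesis hd : is_metric dist.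
Hypothesis hsep : metric_separable dist.
Hypothesis hbor : borel_of_metric dist.
Hypothesis mT : measurable_fun setT T.
Hypothesis hmu : T_invariant T mu.
Hypothesis hnu : T_invariant T nu.

Definition S1 (p : X * X) := (T p.1, p.2).
Definition S2 (p : X * X) := (T p.1, T p.2).

Lemma mS1 : measurable_fun setT S1.
Proof.
apply/measurable_fun_pairP; split; last exact: measurable_snd.
exact: measurableT_comp mT measurable_fst.
Qed.

Lemma mS2 : measurable_fun setT S2.
Proof.
apply/measurable_fun_pairP; split.
  exact: measurableT_comp mT measurable_fst.
exact: measurableT_comp mT measurable_snd.
Qed.

Lemma PS1 A : measurable A -> (mu \x nu)%E (S1 @^-1` A) = (mu \x nu)%E A.
Proof.
move=> mA.
unshelve epose proof (@product_measure_unique _ _ X X R mu nu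
  (pushforward (mu \x nu)%E S1) _ A mA) as h.
- exact: mS1.
- move=> B C mB mC; rewrite /pushforward /=.
  change ((mu \x nu)%E ((T @^-1` B) `*` C) = (mu B * nu C)%E).
  rewrite product_measure1E //; last by rewrite -[_ @^-1` _]setTI; exact: mT.
  by congr (_ * _)%E; exact: hmu.
- by rewrite h.
Qed.

Lemma PS2 A : measurable A -> (mu \x nu)%E (S2 @^-1` A) = (mu \x nu)%E A.
Proof.
move=> mA.
unshelve epose proof (@product_measure_unique _ _ X X R mu nu
  (pushforward (mu \x nu)%E S2) _ A mA) as h.
- exact: mS2.
- move=> B C mB mC; rewrite /pushforward /=.
  change ((mu \x nu)%E ((T @^-1` B) `*` (T @^-1` C)) = (mu B * nu C)%E).
  rewrite product_measure1E //; try by rewrite -[_ @^-1` _]setTI; exact: mT.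
  by congr (_ * _)%E; [exact: hmu|exact: hnu].
- by rewrite h.
Qed.

Lemma iterS1 n p : iter n S1 p = (iter n T p.1, p.2).
Proof. by case: p => x y; elim: n => [|n IH] //=; rewrite IH. Qed.

Lemma iterS2 n p : iter n S2 p = (iter n T p.1, iter n T p.2).
Proof. by case: p => x y; elim: n => [|n IH] //=; rewrite IH. Qed.

Lemma ball_meas q r : measurable [set y | dist q y < r].
Proof.
apply/hbor; apply: sub_sigma_algebra => y hy.
have [d0 dE dsym dtri] := hd.
exists (r - dist q y); first by rewrite subr_gt0.
move=> z /= hz; have := dtri q y z; lra.
Qed.

Lemma mdist : measurable_fun setT (fun p : X * X => dist p.1 p.2).
Proof.
have [d0 dE dsym dtri] := hd.
have [D [cD hD]] := hsep.
have [f finj] := countable_injP _ cD.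
apply: (measurability _ (RGenInftyO.measurableE R)) => _ [_ [r ->] <-].
rewrite setTI.
pose B (n m : nat) := [set p : X * X | exists q, [/\ D q, f q = n,
  dist q p.1 < (m.+1%:R)^-1 & dist q p.2 < r - (m.+1%:R)^-1]].
have mB n m : measurable (B n m).
  case: (pselect (exists q, D q /\ f q = n)) => [[q0 [Dq0 fq0]]|nq].
    rewrite (_ : B n m = [set y | dist q0 y < (m.+1%:R)^-1] `*`
                         [set y | dist q0 y < r - (m.+1%:R)^-1]).
      by apply: measurableX; exact: ball_meas.
    apply/seteqP; split => -[x y] /=.
      move=> [q [Dq fq h1 h2]].
      have qq : q = q0 by apply: finj; rewrite ?inE // fq fq0.
      by rewrite -qq.
    by move=> [h1 h2]; exists q0; split.
  rewrite (_ : B n m = set0) //.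
  by apply/seteqP; split => // p [q [Dq fq _ _]]; apply: nq; exists q.
rewrite (_ : _ @^-1` _ = \bigcup_n \bigcup_m B n m).
  by apply: bigcupT_measurable => n; apply: bigcupT_measurable => m; exact: mB.
apply/seteqP; split => -[x y] /=.
  rewrite in_itv /= => hxy.
  have dpos : 0 < r - dist x y by rewrite subr_gt0.
  have [m hm] : exists m : nat, 2 / (r - dist x y) < m.+1%:R.
    by exists (Num.truncn (2 / (r - dist x y))); exact: truncnS_gt.
  have e0 : 0 < (m.+1%:R : R)^-1 by rewrite invr_gt0.
  have [q Dq hq] := hD x _ e0.
  exists (f q) => //; exists m => //; exists q; split => //.
    by rewrite dsym.
  have h2 : 2 * (m.+1%:R : R)^-1 < r - dist x y.
    by move: hm; rewrite ltr_pdivrMr // mulrC -ltr_pdivrMr ?ltr0n // => ?.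
  apply: (aux1 hq h2); rewrite -(dsym q x); exact: dtri.
move=> [n _ [m _ [q [Dq fq h1 h2]]]].
rewrite in_itv /=; apply: (aux2 h1 h2); rewrite -(dsym x q); exact: dtri.
Qed.

Lemma dist_ge0 (p : X * X) : 0 <= dist p.1 p.2.
Proof. by have [d0 _ _ _] := hd. Qed.

Lemma part1 (s : nat -> R) : scale_sequence s -> two_jumpy s ->
  {ae (mu \x nu)%E, forall p : X * X,
        zero_or_infty (phi_gauge dist T s p.1 p.2) /\
        zero_or_infty (psi_gauge dist T s p.1 p.2)}.
Proof.
move=> hs hj.
have N1 := @abstract _ _ R (mu \x nu)%E S1 mS1 PS1 _ s mdist dist_ge0 hs hj.
have N2 := @abstract _ _ R (mu \x nu)%E S2 mS2 PS2 _ s mdist dist_ge0 hs hj.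
apply: (negligibleS _ (negligibleU N1 N2)).
move=> p /= hp.
case: (pselect (zero_or_infty (phi_gauge dist T s p.1 p.2))) => h1.
  right => h2; apply: hp; split => //.
  move: h2; rewrite /psi_gauge.
  have -> // : (fun n => (s n * dist (iter n S2 p).1 (iter n S2 p).2)%:E) =
    (fun n => (s n * dist (iter n T p.1) (iter n T p.2))%:E).
  by apply/funext => n; rewrite iterS2.
left => h; apply: h1; move: h; rewrite /phi_gauge.
have -> // : (fun n => (s n * dist (iter n S1 p).1 (iter n S1 p).2)%:E) =
  (fun n => (s n * dist (iter n T p.1) p.2)%:E).
by apply/funext => n; rewrite iterS1.
Qed.

End Concrete.

Theorem theorem3p2 (R : realType) (d : measure_display) (X : measurableType d)
  (dist : X -> X -> R) (T : X -> X)
  (mu nu : probability X R) :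
  is_metric dist -> metric_separable dist -> borel_of_metric dist ->
  measurable_fun setT T -> T_invariant T mu -> T_invariant T nu ->
  (forall s : nat -> R, scale_sequence s -> two_jumpy s ->
     {ae (mu \x nu)%E, forall p : X * X,
        zero_or_infty (phi_gauge dist T s p.1 p.2) /\
        zero_or_infty (psi_gauge dist T s p.1 p.2)}) /\
  (forall alpha : R, 0 < alpha ->
     {ae (mu \x nu)%E, forall p : X * X,
        zero_or_infty (phi_gauge dist T (fun n => n%:R `^ alpha) p.1 p.2) /\
        zero_or_infty (psi_gauge dist T (fun n => n%:R `^ alpha) p.1 p.2)}).
Proof.
move=> hd hsep hbor mT hmu hnu; split.
  by move=> s hs hj; exact: part1.
move=> alpha a0; have [hs hj] := pow_scale alpha a0; exact: part1.
Qed.
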